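(* Let $\mathcal{F}\subseteq\mathcal{P}(\omega)$ be compact, hereditary and covering $\omega$. Then $\lVert\cdot\rVert^{\mathcal{F}}\colon\mathbb{R}^\omega\to[0,\infty]$ is a nice quasi-norm; in particular it is lower semicontinuous: $\lim_{n\to\infty}\lVert P_n(x)\rVert^{\mathcal{F}}=\lVert x\rVert^{\mathcal{F}}$ for every $x\in\mathbb{R}^\omega$ (allowing the value $\infty$).
   Context: $\omega=\{1,2,3,\dots\}$. Subsets of $\omega$ are identified with elements of $2^\omega$ (product topology); $\mathcal{F}$ is compact if compact in $2^\omega$, hereditary if closed under taking subsets, and covers $\omega$ if $\bigcup\mathcal{F}=\omega$. A partition is a family $\mathcal{P}\subseteq\mathcal{P}(\omega)$ with $\emptyset\in\mathcal{P}$, $\bigcup\mathcal{P}=\omega$, elements pairwise disjoint; $\mathbb{P}_\mathcal{F}$ is the set of partitions contained in $\mathcal{F}$. For $x\in\mathbb{R}^\omega$, $\lVert x\rVert^{\mathcal{F}}=\inf_{\mathcal{P}\in\mathbb{P}_\mathcal{F}}\sum_{F\in\mathcal{P}}\sup_{k\in F}|x(k)|\in[0,\infty]$ (with $\sup_{k\in\emptyset}=0$). For $A\subseteq\omega$, $P_A(x)$ is the sequence equal to $x(k)$ for $k\in A$ and $0$ otherwise; $P_n=P_{\{1,\dots,n\}}$. A function $\varphi\colon\mathbb{R}^\omega\to[0,\infty]$ is nice if (i) $\varphi(x)<\infty$ for all finitely supported $x$; (ii) $|x(n)|\le|y(n)|$ for all $n$ implies $\varphi(x)\le\varphi(y)$;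 (iii) $\lim_n\varphi(P_n(x))=\varphi(x)$ for every $x$. A (possibly extended) quasi-norm satisfies $\lVert x\rVert=0\iff x=0$, $\lVert\lambda x\rVert=|\lambda|\lVert x\rVert$, and $\lVert x+y\rVert\le c(\lVert x\rVert+\lVert y\rVert)$ for some constant $c\ge1$. *)

(* Defs.v *)
From HB Require Import structures.
From mathcomp Require Import all_boot all_order all_algebra.
From mathcomp Require Import all_classical all_reals.
From mathcomp Require Import ereal topology normedtype sequences esum cantor.
Set Implicit Arguments. Unset Strict Implicit. Unset Printing Implicit Defensive.
Import Order.TTheory GRing.Theory Num.Theory.
Local Open Scope classical_set_scope.
Local Open Scope ring_scope.

(* omega = {1,2,3,...} is relabelled as nat = {0,1,2,...} via k |-> k-1. *)

Definition char_of (A : set nat) : cantor_space := fun k => `[< A k >].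

Definition fam_compact (F : set (set nat)) : Prop := compact (char_of @` F).
Definition fam_hereditary (F : set (set nat)) : Prop :=
  forall A B, F A -> B `<=` A -> F B.
Definition fam_covers (F : set (set nat)) : Prop := \bigcup_(A in F) A = setT.

Definition is_partition (P : set (set nat)) : Prop :=
  [/\ P set0, \bigcup_(A in P) A = setT &
      forall A B, P A -> P B -> A <> B -> A `&` B = set0].

Definition partitions_in (F : set (set nat)) : set (set (set nat)) :=
  [set P | is_partition P /\ P `<=` F].

(* sup_{k in A} |x(k)| in [0,oo], with sup over the empty set equal to 0
   (adding 0 to the set changes nothing since |x(k)| >= 0) *)
Definition supabs (R : realType) (x : nat -> R) (A : set nat) : \bar R :=
  ereal_sup ([set 0%E] `|` [set (`|x k|)%:E | k in A]).

Definition Fnorm (R : realType) (F : set (set nat)) (x : nat -> R) : \bar R :=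
  ereal_inf [set (\esum_(A in P) supabs x A)%E | P in partitions_in F].

(* P_A and P_n = P_{1..n} (i.e. indices 0..n-1 after relabelling) *)
Definition projA (R : realType) (A : set nat) (x : nat -> R) : nat -> R :=
  fun k => if `[< A k >] then x k else 0.
Definition projn (R : realType) (n : nat) (x : nat -> R) : nat -> R :=
  projA [set k | (k < n)%N] x.

Definition finitely_supported (R : realType) (x : nat -> R) : Prop :=
  finite_set [set k | x k != 0].

Definition nice (R : realType) (phi : (nat -> R) -> \bar R) : Prop :=
  [/\ (forall x, finitely_supported x -> (phi x < +oo)%E),
      (forall x y, (forall n, `|x n| <= `|y n|) -> (phi x <= phi y)%E) &
      (forall x, (fun n => phi (projn n x)) @ \oo --> phi x)].

Definition quasi_norm (R : realType) (phi : (nat -> R) -> \bar R) : Prop :=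
  [/\ (forall x, phi x = 0%E <-> x = (fun _ => 0)),
      (forall (l : R) (x : nat -> R), phi (fun k => l * x k) = (`|l|%:E * phi x)%E) &
      exists c : R, 1 <= c /\
        forall x y : nat -> R, (phi (fun k => (x k + y k)%R) <= c%:E * (phi x + phi y))%E].

(* Main.v *)
Require Import Defs.
From HB Require Import structures.
From mathcomp Require Import all_boot all_order all_algebra.
From mathcomp Require Import all_classical all_reals.
From mathcomp Require Import ereal topology normedtype sequences esum cantor.
Import Order.TTheory GRing.Theory Num.Theory.
Local Open Scope classical_set_scope.
Local Open Scope ring_scope.

Set Implicit Arguments. Unset Strict Implicit. Unset Printing Implicit Defensive.

Section Aux.
Variable R : realType.
Local Open Scope ereal_scope.
Implicit Types (x y : nat -> R) (A B : set nat).

Lemma supabs_ge0 x A : 0 <= supabs x A.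
Proof. by apply: ereal_sup_ubound; left. Qed.

Lemma supabs_ge x A k : A k -> (`|x k|)%:E <= supabs x A.
Proof. by move=> Ak; apply: ereal_sup_ubound; right; exists k. Qed.

Lemma supabs_le x A b : 0 <= b -> (forall k, A k -> (`|x k|)%:E <= b) ->
  supabs x A <= b.
Proof. by move=> b0 H; apply: ge_ereal_sup => e [->|[k Ak <-]] //; apply: H. Qed.

Lemma supabs_mono x y A B : A `<=` B -> (forall k, A k -> `|x k| <= `|y k|)%R ->
  supabs x A <= supabs y B.
Proof.
move=> AB H; apply: supabs_le; first exact: supabs_ge0.
move=> k Ak; apply: le_trans (supabs_ge _ (AB _ Ak)); rewrite lee_fin; exact: H.
Qed.

Definition cost x (P : set (set nat)) := \esum_(A in P) supabs x A.

Lemma cost_ge0 x P : 0 <= cost x P.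
Proof. by apply: esum_ge0 => A _; apply: supabs_ge0. Qed.

Lemma FnormE F x : Fnorm F x = ereal_inf [set cost x P | P in partitions_in F].
Proof. by []. Qed.

Lemma Fnorm_le F x P : partitions_in F P -> Fnorm F x <= cost x P.
Proof. by move=> HP; apply: ereal_inf_lbound; exists P. Qed.

Lemma Fnorm_ge F x b : (forall P, partitions_in F P -> b <= cost x P) ->
  b <= Fnorm F x.
Proof. by move=> H; apply: le_ereal_inf_tmp => _ [P HP <-]; apply: H. Qed.

Lemma Fnorm_ge0 F x : 0 <= Fnorm F x.
Proof. by apply: Fnorm_ge => P _; apply: cost_ge0. Qed.

Lemma cost_mono x y P : (forall k, `|x k| <= `|y k|)%R -> cost x P <= cost y P.
Proof. by move=> H; apply: le_esum => A _; apply: supabs_mono. Qed.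

Lemma Fnorm_mono F x y : (forall k, `|x k| <= `|y k|)%R -> Fnorm F x <= Fnorm F y.
Proof.
move=> H; apply: Fnorm_ge => P HP; apply: le_trans (Fnorm_le _ HP) _.
exact: cost_mono.
Qed.

End Aux.
Section EsumAux.
Variables (R : realType) (T : choiceType).
Local Open Scope ereal_scope.
Implicit Types (f g : T -> \bar R) (P Q : set T).

Lemma esum_subset P Q f : (forall i, 0 <= f i) -> P `<=` Q ->
  \esum_(i in P) f i <= \esum_(i in Q) f i.
Proof.
move=> f0 PQ; apply: ge_ereal_sup => _ [X [finX XP] <-].
apply: esum_ge; exists X => //; split => // i /XP /PQ //.
Qed.

Lemma esum_setU_le P Q f : (forall i, 0 <= f i) ->
  \esum_(i in P `|` Q) f i <= \esum_(i in P) f i + \esum_(i in Q) f i.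
Proof.
move=> f0; rewrite esum_mkcond (esum_mkcond P) (esum_mkcond Q) -esumD; last first.
- by move=> i _; case: ifP.
- by move=> i _; case: ifP.
apply: le_esum => i _; rewrite in_setU.
case: (i \in P); case: (i \in Q) => /=.
- by rewrite leeDl.
- by rewrite adde0.
- by rewrite add0e.
- by rewrite adde0.
Qed.

Lemma esum_set0U a P f : f a = 0 ->
  \esum_(i in a |` P) f i = \esum_(i in P) f i.
Proof.
move=> fa; rewrite esum_mkcond (esum_mkcond P); apply: eq_esum => i _.
rewrite in_setU in_set1; have [->|_] := eqVneq i a; last by [].
by rewrite fa; case: ifP.
Qed.

Lemma esumZ P f (r : R) : (0 < r)%R -> (forall i, 0 <= f i) ->
  \esum_(i in P) (r%:E * f i) = r%:E * \esum_(i in P) f i.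
Proof.
move=> r0 f0; rewrite /esum -ereal_sup_pZl //; congr ereal_sup.
apply/seteqP; split => _ [X HX <-].
  by exists (\sum_(i \in X) f i); [exists X|rewrite ge0_mule_fsumr].
by move: HX => [Y HY <-]; exists Y => //; rewrite ge0_mule_fsumr.
Qed.

End EsumAux.

Section EsumImage.
Variables (R : realType) (T U : pointedType).
Local Open Scope ereal_scope.

Lemma esum_image_le (P : set T) (g : T -> U) (f : U -> \bar R) :
  (forall i, 0 <= f i) ->
  \esum_(j in g @` P) f j <= \esum_(i in P) f (g i).
Proof.
move=> f0.
pose h := fun y : U => get (fun x => P x /\ g x = y).
have hP : forall y, (g @` P) y -> P (h y) /\ g (h y) = y.
  by move=> y [x Px <-]; apply: (@xgetPex _ point (fun x0 => P x0 /\ g x0 = g x)); exists x.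
have -> : g @` P = g @` (h @` (g @` P)).
  apply/seteqP; split => y.
    by move=> Hy; exists (h y); [exists y|exact: (hP y Hy).2].
  by move=> [w [z Hz Ez] Ew]; subst; rewrite (hP z Hz).2.
rewrite esum_image; last first.
  by move=> _ _ /set_mem[a Ha <-] /set_mem[b Hb <-]; rewrite (hP a Ha).2 (hP b Hb).2 => ->.
apply: esum_subset => //; by move=> _ [y Hy <-]; exact: (hP y Hy).1.
Qed.

End EsumImage.

Section Partitions.
Variables (R : realType) (F : set (set nat)).
Hypotheses (Fher : fam_hereditary F) (Fcov : fam_covers F).
Local Open Scope ereal_scope.
Implicit Types (x y : nat -> R).

Lemma F_set1 k : F [set k].
Proof.
have : (\bigcup_(A in F) A) k by rewrite Fcov.
by move=> [A FA Ak]; apply: (Fher FA) => i ->.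
Qed.

Lemma F_set0 : F set0.
Proof. by apply: (Fher (F_set1 0)). Qed.

Definition Sg : set (set nat) := set0 |` [set [set k] | k in setT].

Lemma Sg_part : partitions_in F Sg.
Proof.
split; last by move=> A [->|[k _ <-]]; [exact: F_set0|exact: F_set1].
split.
- by left.
- apply/seteqP; split => // k _; by exists [set k] => //; right; exists k.
- move=> A B [->|[k _ <-]] [->|[j _ <-]] AB; try by rewrite ?set0I ?setI0.
  apply/seteqP; split => // i [/= -> ik]; apply: AB; by rewrite ik.
Qed.

Lemma supabs1 x k : supabs x [set k] = (`|x k|)%:E.
Proof.
apply/eqP; rewrite eq_le supabs_ge //= andbT.
by apply: supabs_le => // j ->.
Qed.

Lemma supabs0 x : supabs x set0 = 0.
Proof. by apply/eqP; rewrite eq_le supabs_ge0 andbT; apply: supabs_le. Qed.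

Lemma cost_Sg x : cost x Sg = \esum_(k in setT) (`|x k|)%:E.
Proof.
rewrite /cost /Sg esum_set0U ?supabs0 // esum_image; last first.
  by move=> a b _ _ /= E; have : [set a] b by rewrite E.
by apply: eq_esum => k _; rewrite supabs1.
Qed.

Lemma cost_Sg_fin x : finitely_supported x -> cost x Sg < +oo.
Proof.
move=> fx; rewrite cost_Sg.
have -> : \esum_(k in setT) (`|x k|)%:E = \esum_(k in [set k | x k != 0%R]) (`|x k|)%:E.
  rewrite [RHS]esum_mkcond; apply: eq_esum => k _.
  case: ifPn => // /negP; rewrite inE /= => /negP; rewrite negbK => /eqP ->.
  by rewrite normr0.
by rewrite esum_fset // ?fsumEFin // ltry.
Qed.

Lemma cost_ge_pt x P A k : P A -> A k -> (`|x k|)%:E <= cost x P.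
Proof.
move=> PA Ak; apply: le_trans (supabs_ge x Ak) _.
apply: esum_ge; exists [set A]; first by split => // B ->.
by rewrite fsbig_set1.
Qed.

Lemma part_pt P k : is_partition P -> exists2 A, P A & A k.
Proof.
move=> [_ cov _]; have : (\bigcup_(A in P) A) k by rewrite cov.
by move=> [A PA Ak]; exists A.
Qed.

Lemma Fnorm_ge_pt x k : (`|x k|)%:E <= Fnorm F x.
Proof.
apply: Fnorm_ge => P [HP _]; have [A PA Ak] := part_pt k HP.
exact: cost_ge_pt PA Ak.
Qed.

Lemma Fnorm_0 : Fnorm F (fun _ : nat => 0%R : R) = 0.
Proof.
apply/eqP; rewrite eq_le Fnorm_ge0 andbT.
apply: le_trans (Fnorm_le _ Sg_part) _.
rewrite /cost esum1 // => A _; apply/eqP; rewrite eq_le supabs_ge0 andbT.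
by apply: supabs_le => // k _; rewrite normr0.
Qed.

Lemma Fnorm_eq0 x : Fnorm F x = 0 <-> x = (fun _ => 0%R : R).
Proof.
split; last by move=> ->; exact: Fnorm_0.
move=> H; apply: funext => k; apply/eqP; rewrite -normr_eq0 eq_le normr_ge0 andbT.
by rewrite -lee_fin; apply: le_trans (Fnorm_ge_pt x k) _; rewrite H.
Qed.

End Partitions.

Section Homog.
Variables (R : realType) (F : set (set nat)).
Hypotheses (Fher : fam_hereditary F) (Fcov : fam_covers F).
Local Open Scope ereal_scope.
Implicit Types (x y : nat -> R).

Lemma supabsZ x (l : R) A : (0 < `|l|)%R ->
  supabs (fun k => l * x k)%R A = (`|l|)%:E * supabs x A.
Proof.
move=> l0; rewrite /supabs -ereal_sup_pZl //; congr ereal_sup.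
apply/seteqP; split => e.
  move=> [->|[k Ak <-]]; first by exists 0 => //; [left|rewrite mule0].
  by exists (`|x k|)%:E; [right; exists k|rewrite -EFinM normrM].
move=> [_ [->|[k Ak <-]] <-]; first by left; rewrite mule0.
by right; exists k => //; rewrite -EFinM normrM.
Qed.

Lemma costZ x (l : R) P : (0 < `|l|)%R ->
  cost (fun k => l * x k)%R P = (`|l|)%:E * cost x P.
Proof.
move=> l0; rewrite /cost -esumZ //; last by move=> ?; apply: supabs_ge0.
by apply: eq_esum => A _; rewrite supabsZ.
Qed.

Lemma Fnorm_hom (l : R) x :
  Fnorm F (fun k => l * x k)%R = (`|l|)%:E * Fnorm F x.
Proof.
have [->|l0] := eqVneq l 0%R.
  rewrite normr0 mul0e (_ : (fun k => 0 * x k)%R = (fun _ => 0%R)).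
    exact: Fnorm_0.
  by apply: funext => k; rewrite mul0r.
have l0' : (0 < `|l|)%R by rewrite normr_gt0.
rewrite /Fnorm -ereal_inf_pZl //; congr ereal_inf.
apply/seteqP; split => e.
  move=> [P HP <-]; exists (cost x P); first by exists P.
  by rewrite -costZ.
by move=> [_ [P HP <-] <-]; exists P => //; rewrite -costZ.
Qed.

End Homog.

Section Triangle.
Variables (R : realType) (F : set (set nat)).
Hypotheses (Fher : fam_hereditary F) (Fcov : fam_covers F).
Local Open Scope ereal_scope.
Implicit Types (x y : nat -> R).

Lemma inf_addr (S : set (\bar R)) c m : (forall a, S a -> 0 <= a) -> 0 <= c ->
  (forall a, S a -> m <= a + c) -> m <= ereal_inf S + c.
Proof.
move=> S0 c0 H; have i0 : 0 <= ereal_inf S by apply: le_ereal_inf_tmp.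
case: c c0 H => [r| |] c0 H; last by [].
  by rewrite -leeBlDr //; apply: le_ereal_inf_tmp => a Sa; rewrite leeBlDr //; apply: H.
by rewrite addey ?leey // gt_eqF // (lt_le_trans _ i0) // ltNy0.
Qed.

Lemma Fnorm_max x y :
  Fnorm F (fun k => Num.max `|x k| `|y k|)%R <= Fnorm F x + Fnorm F y.
Proof.
set z := (fun k => Num.max `|x k| `|y k|)%R.
suff key : forall P Q, partitions_in F P -> partitions_in F Q ->
    Fnorm F z <= cost x P + cost y Q.
  apply: inf_addr; [by move=> _ [P _ <-]; apply: cost_ge0|exact: Fnorm_ge0|].
  move=> _ [P HP <-]; rewrite addeC; apply: inf_addr.
  - by move=> _ [Q _ <-]; apply: cost_ge0.
  - exact: cost_ge0.
  by move=> _ [Q HQ <-]; rewrite addeC; apply: key.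
move=> P Q [[P0 Pcov Pdis] PF] [[Q0 Qcov Qdis] QF].
pose U := [set k | `|y k| <= `|x k|]%R.
pose g1 := fun A : set nat => A `&` U.
pose g2 := fun A : set nat => A `&` ~` U.
pose Rp := g1 @` P `|` g2 @` Q.
have HR : partitions_in F Rp.
  split; last first.
    move=> _ [[A PA <-]|[A QA <-]].
      by apply: (Fher (PF _ PA)) => k [].
    by apply: (Fher (QF _ QA)) => k [].
  split.
  - by left; exists set0 => //; rewrite /g1 set0I.
  - apply/seteqP; split => // k _.
    have [Uk|nUk] := pselect (U k).
      have [A PA Ak] := part_pt k (And3 P0 Pcov Pdis).
      by exists (g1 A); [left; exists A|split].
    have [A QA Ak] := part_pt k (And3 Q0 Qcov Qdis).
    by exists (g2 A); [right; exists A|split].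
  - move=> _ _ [[A PA <-]|[A QA <-]] [[B PB <-]|[B QB <-]] AB.
    + have AB' : A <> B by move=> E; apply: AB; rewrite E.
      by apply/seteqP; split => // k [[Ak _] [Bk _]]; rewrite -(Pdis _ _ PA PB AB'); split.
    + by apply/seteqP; split => // k [[_ Uk] [_ nUk]].
    + by apply/seteqP; split => // k [[_ nUk] [_ Uk]].
    + have AB' : A <> B by move=> E; apply: AB; rewrite E.
      by apply/seteqP; split => // k [[Ak _] [Bk _]]; rewrite -(Qdis _ _ QA QB AB'); split.
apply: le_trans (Fnorm_le _ HR) _; rewrite /cost /Rp.
apply: le_trans (esum_setU_le _ _ (fun A => supabs_ge0 z A)) _.
apply: leeD.
  apply: le_trans (esum_image_le _ _ (fun A => supabs_ge0 z A)) _.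
  apply: le_esum => A _; apply: supabs_mono; first by move=> k [].
  move=> k [_ Uk]; rewrite /z ger0_norm; last by rewrite le_max normr_ge0.
  by rewrite ge_max lexx.
apply: le_trans (esum_image_le _ _ (fun A => supabs_ge0 z A)) _.
apply: le_esum => A _; apply: supabs_mono; first by move=> k [].
move=> k [_ nUk]; rewrite /z ger0_norm; last by rewrite le_max normr_ge0.
rewrite ge_max lexx andbT; apply: ltW; rewrite ltNge; apply/negP => H; exact: nUk.
Qed.

Lemma Fnorm_tri x y :
  Fnorm F (fun k => x k + y k)%R <= 2%:E * (Fnorm F x + Fnorm F y).
Proof.
pose z := (fun k => Num.max `|x k| `|y k|)%R.
apply: le_trans (@Fnorm_mono R F _ (fun k => 2 * z k)%R _) _.
  move=> k; apply: le_trans (ler_normD _ _) _.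
  rewrite normrM ger0_norm // ger0_norm; last by rewrite le_max normr_ge0.
  rewrite mulr_natl mulr2n; apply: lerD; rewrite le_max lexx ?orbT //.
rewrite Fnorm_hom // ger0_norm //; apply: lee_wpmul2l => //.
exact: Fnorm_max.
Qed.

End Triangle.

Section Cluster.
Variable I : eqType.
Local Notation PT := (prod_topology (fun _ : I => bool)).

Lemma nbhs_agree (p : PT) (l : seq I) :
  nbhs p [set q : PT | forall c, c \in l -> q c = p c].
Proof.
elim: l => [|c l IH].
  by apply: filterS (filterT); move=> q _ c.
have Hc : nbhs p [set q : PT | q c = p c].
  apply: (@proj_continuous I (fun _ => bool) c p [set p c]).
  by rewrite nbhs_principalE => y /= ->.
apply: filterS (filterI Hc IH) => q [qc ql] d; rewrite in_cons => /orP[/eqP->|dl] //.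
exact: ql.
Qed.

Lemma cluster_seq (K : set PT) (s : nat -> PT) : compact K -> (forall n, K (s n)) ->
  exists2 p, K p & forall (l : seq I) N, exists n, (N <= n)%N /\ forall c, c \in l -> s n c = p c.
Proof.
move=> cK sK.
have HK : (s @ \oo) K by exists 0%N => // n _; exact: sK.
have [p [Kp clp]] := cK (s @ \oo) _ HK.
exists p => // l N.
have HA : (s @ \oo) (s @` [set n | (N <= n)%N]).
  by exists N => // n /= Nn; exists n.
have [q [[n Nn <-] Hq]] := clp _ _ HA (nbhs_agree p l).
by exists n; split.
Qed.

Lemma PT_compact : compact [set: PT].
Proof.
have := @tychonoff I (fun _ => bool) (fun _ => setT) (fun _ => bool_compact).
by congr (compact _); rewrite eqEsubset.
Qed.

End Cluster.

Section SumSup.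
Variables (R : realType) (T : eqType).
Local Open Scope ereal_scope.

Lemma supD_le (S : set (\bar R)) (t B : \bar R) : S 0 -> 0 <= t ->
  (forall e, S e -> e \is a fin_num) ->
  (forall e, S e -> e + t <= B) -> ereal_sup S + t <= B.
Proof.
move=> S0 t0 Sfin H; case: t t0 H => [r| |] t0 H; last by [].
  rewrite -leeBrDr //; apply: ge_ereal_sup => e Se; rewrite leeBrDr //; exact: H.
by apply: le_trans (H 0 S0); rewrite add0e leey.
Qed.

Lemma sum_sup_le (s : seq T) (S : T -> set (\bar R)) (B : \bar R) :
  uniq s -> (forall A, S A 0) -> (forall A e, S A e -> e \is a fin_num) ->
  (forall c : T -> \bar R, (forall A, A \in s -> S A (c A)) -> \sum_(A <- s) c A <= B) ->
  \sum_(A <- s) ereal_sup (S A) <= B.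
Proof.
move=> + S0 Sfin; elim: s B => [|a s IH] B.
  by move=> _ H; have := H (fun _ => 0) (fun A (AI : A \in [::]) => S0 A); rewrite !big_nil.
rewrite cons_uniq => /andP[nas us] H; rewrite big_cons.
apply: supD_le => //.
  by rewrite sume_ge0 // => A _; apply: ereal_sup_ubound.
  by move=> e; apply: Sfin.
move=> e Se; rewrite -(leeBrDl _ _ (Sfin _ _ Se)).
apply: IH => // c Hc; rewrite (leeBrDl _ _ (Sfin _ _ Se)).
pose c' := fun A => if A == a then e else c A.
have := H c'; rewrite big_cons /c' eqxx.
rewrite (eq_big_seq c); last by move=> A As; case: eqP => // EA; by move: nas; rewrite -EA As.
apply => A; rewrite in_cons; case: eqP => [->|_] //= /Hc //.
Qed.

End SumSup.

Lemma blk_uniq (P : set (set nat)) A B k : is_partition P -> P A -> P B -> A k -> B k -> A = B.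
Proof.
move=> [_ _ dis] PA PB Ak Bk; apply: contrapT => AB.
have := dis _ _ PA PB AB; move=> /seteqP[+ _] => /(_ k (conj Ak Bk)) //.
Qed.

Section Limit.
Variables (F : set (set nat)) (Pn : nat -> set (set nat)).
Hypothesis HPn : forall n, partitions_in F (Pn n).
Local Notation PT := (prod_topology (fun _ : nat * nat => bool)).

Definition Erel n : PT := fun ij => `[< exists A, Pn n A /\ A ij.1 /\ A ij.2 >].

Variable p : PT.
Hypothesis Hp : forall (l : seq (nat * nat)) N,
  exists n, (N <= n)%N /\ forall c, c \in l -> Erel n c = p c.

Definition Rel i j : bool := p (i, j).

Lemma ErelP n i j : Erel n (i, j) <-> exists A, Pn n A /\ A i /\ A j.
Proof. by split => [/asboolP|H] //=; apply/asboolP. Qed.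

Lemma Rrefl i : Rel i i.
Proof.
have [n [_ Hn]] := Hp [:: (i, i)] 0.
rewrite /Rel -Hn ?mem_head //; apply/ErelP.
have [A PA Ai] := part_pt i (HPn n).1; by exists A.
Qed.

Lemma Rsym i j : Rel i j -> Rel j i.
Proof.
have [n [_ Hn]] := Hp [:: (i, j); (j, i)] 0.
have H1 := Hn (i, j) (mem_head _ _).
have H2 : Erel n (j, i) = p (j, i) by apply: Hn; rewrite in_cons mem_head orbT.
rewrite /Rel -H1 -H2.
by move=> /ErelP[A [PA [Ai Aj]]]; apply/ErelP; exists A.
Qed.

Lemma Rtrans i j k : Rel i j -> Rel j k -> Rel i k.
Proof.
have [n [_ Hn]] := Hp [:: (i, j); (j, k); (i, k)] 0.
have H1 := Hn (i, j) (mem_head _ _).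
have H2 : Erel n (j, k) = p (j, k) by apply: Hn; rewrite in_cons mem_head orbT.
have H3 : Erel n (i, k) = p (i, k) by apply: Hn; rewrite !in_cons eqxx !orbT.
rewrite /Rel -H1 -H2 -H3.
move=> /ErelP[A [PA [Ai Aj]]] /ErelP[B [PB [Bj Bk]]]; apply/ErelP; exists A.
have AB := blk_uniq (HPn n).1 PA PB Aj Bj; subst B; by [].
Qed.

Definition Class i : set nat := [set j | Rel i j].

Lemma Class_eq i j : Rel i j -> Class i = Class j.
Proof.
move=> Rij; apply/seteqP; split => k /=.
  by move=> Rik; apply: Rtrans (Rsym Rij) Rik.
by move=> Rjk; apply: Rtrans Rij Rjk.
Qed.

Definition Pl : set (set nat) := set0 |` [set Class i | i in setT].

Lemma Pl_part : is_partition Pl.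
Proof.
split.
- by left.
- apply/seteqP; split => // k _; exists (Class k); first by right; exists k.
  exact: Rrefl.
- move=> A B [->|[i _ <-]] [->|[j _ <-]] AB; try by rewrite ?set0I ?setI0.
  apply/seteqP; split => // k [/= Rik Rjk]; apply: AB.
  by apply: Class_eq; apply: Rtrans Rik (Rsym Rjk).
Qed.

Hypotheses (Fcomp : fam_compact F) (Fher : fam_hereditary F) (Fcov : fam_covers F).

Lemma Class_F i : F (Class i).
Proof.
have HB : forall m, exists B, F B /\ forall k, (k < m)%N -> (B k <-> Rel i k).
  move=> m; have [n [_ Hn]] := Hp [seq (i, k) | k <- iota 0 m] 0.
  have [A PA Ai] := part_pt i (HPn n).1.
  exists A; split; first exact: (HPn n).2 _ PA.
  move=> k km; have Hk : Erel n (i, k) = p (i, k).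
    by apply: Hn; apply: map_f; rewrite mem_iota.
  rewrite /Rel -Hk; split.
    by move=> Ak; apply/ErelP; exists A.
  move=> /ErelP[A' [PA' [A'i A'k]]].
  by have AA := blk_uniq (HPn n).1 PA PA' Ai A'i; subst A'.
have [Bm HBm] := choice HB.
have := @cluster_seq nat (char_of @` F) (fun m => char_of (Bm m)) Fcomp.
case=> [m|q [C FC <-] Hq]; first by exists (Bm m) => //; exact: (HBm m).1.
suff -> : Class i = C by [].
apply/seteqP; split => k /=.
  have [m [km Hm]] := Hq [:: k] k.+1.
  have := Hm k (mem_head _ _); rewrite /char_of => E1.
  have HBk := (HBm m).2 k km.
  move=> Rik; apply/asboolP; rewrite -E1; apply/asboolP; exact/HBk.
have [m [km Hm]] := Hq [:: k] k.+1.
have := Hm k (mem_head _ _); rewrite /char_of => E1.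
have HBk := (HBm m).2 k km.
move=> Ck; apply/HBk; apply/asboolP; rewrite E1; exact/asboolP.
Qed.

Lemma Pl_partF : partitions_in F Pl.
Proof.
split; first exact: Pl_part.
by move=> A [->|[i _ <-]]; [exact: F_set0|exact: Class_F].
Qed.

Variables (R : realType) (x : nat -> R) (Bd : \bar R).
Hypothesis Hcost : forall n, (cost (projn n x) (Pn n) <= Bd)%E.

Lemma cost_Pl : (cost x Pl <= Bd)%E.
Proof.
rewrite /cost; apply: ge_ereal_sup => _ [X [finX XPl] <-].
rewrite fsbig_finite //=.
set s := finmap.enum_fset (fset_set X).
have sX : forall A, A \in s -> Pl A.
  by move=> A As; apply: XPl; move: As; rewrite (in_fset_set finX) inE.
pose SS := fun A : set nat => [set (0 : \bar R)] `|` [set (`|x k|)%:E | k in A].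
change ((\sum_(A <- s) ereal_sup (SS A)) <= Bd)%E.
apply: sum_sup_le.
- exact: finmap.fset_uniq.
- by move=> A; left.
- by move=> A e [->|[k _ <-]].
move=> c Hc.
pose w := fun A : set nat => get (fun k => A k /\ (c A <= (`|x k|)%:E)%E).
have Hw : forall A, A \in s -> A != set0 -> A (w A) /\ (c A <= (`|x (w A)|)%:E)%E.
  move=> A As A0; apply: (@xgetPex _ 0%N (fun k => A k /\ (c A <= (`|x k|)%:E)%E)).
  case: (Hc A As) => [->|[k Ak <-]]; last by exists k.
  have /set0P[k Ak] := A0; exists k; split => //; rewrite lee_fin normr_ge0 //.
have Hw0 : forall A, A \in s -> A = set0 -> c A = 0%E.
  by move=> A As A0; case: (Hc A As) => [->|[k]] //; rewrite A0.
pose m0 := (\max_(A <- s) w A).+1.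
have wm : forall A, A \in s -> (w A < m0)%N.
  by move=> A As; rewrite ltnS; exact: leq_bigmax_seq.
pose l := [seq (w A, w B) | A <- s, B <- s].
have [n [m0n Hn]] := Hp l m0.
pose blk := fun A => get (fun B => Pn n B /\ B (w A)).
have Hblk : forall A, Pn n (blk A) /\ blk A (w A).
  move=> A; apply: (@xgetPex _ set0 (fun B => Pn n B /\ B (w A))); have [B PB Bw] := part_pt (w A) (HPn n).1; by exists B.
pose s' := [seq A <- s | A != set0].
have Pl_class : forall A, Pl A -> A != set0 -> exists a, A = Class a.
  by move=> A [->|[a _ <-]]; [rewrite eqxx|exists a].
have inj : {in s' &, injective blk}.
  move=> A A'; rewrite !mem_filter => /andP[A0 As] /andP[A'0 A's] EB.
  have [a Ea] := Pl_class A (sX A As) A0.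
  have [a' Ea'] := Pl_class A' (sX A' A's) A'0.
  have [wA _] := Hw A As A0; have [wA' _] := Hw A' A's A'0.
  have HE : Erel n (w A, w A').
    apply/ErelP; exists (blk A); split; first exact: (Hblk A).1.
    by split; [exact: (Hblk A).2|rewrite EB; exact: (Hblk A').2].
  have Hl : (w A, w A') \in l by apply: allpairs_f.
  rewrite (Hn _ Hl) in HE.
  have R1 : Class a (w A) by rewrite -Ea.
  have R2 : Class a' (w A') by rewrite -Ea'.
  rewrite Ea Ea'; apply: Class_eq.
  exact: Rtrans (Rtrans R1 HE) (Rsym R2).
apply: (@le_trans _ _ (\sum_(A <- s) (if A != set0 then (`|x (w A)|)%:E else 0%E))).
  rewrite big_seq [X in (_ <= X)%E]big_seq; apply: lee_sum => A As.
  case: ifPn => A0; first exact: (Hw A As A0).2.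
  by rewrite (Hw0 A As (eqP (negbNE A0))).
rewrite -big_mkcond -big_filter.
apply: (@le_trans _ _ (\sum_(A <- s') supabs (projn n x) (blk A))).
  rewrite big_seq [X in (_ <= X)%E]big_seq; apply: lee_sum => A.
  rewrite mem_filter => /andP[A0 As].
  have wn : (w A < n)%N := leq_trans (wm A As) m0n.
  apply: le_trans (supabs_ge (projn n x) (Hblk A).2).
  by rewrite /projn /projA asboolT.
have -> : (\sum_(A <- s') supabs (projn n x) (blk A) =
    \sum_(B <- map blk s') supabs (projn n x) B)%E by rewrite big_map.
rewrite fsbig_seq; last by rewrite map_inj_in_uniq // filter_uniq // finmap.fset_uniq.
apply: le_trans (Hcost n); apply: esum_ge; exists [set` map blk s'] => //.
split; first exact: finite_seq.
by move=> B /= /mapP[A _ ->]; exact: (Hblk A).1.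
Qed.

End Limit.

Section Final.
Variables (R : realType) (F : set (set nat)).
Hypotheses (Fcomp : fam_compact F) (Fher : fam_hereditary F) (Fcov : fam_covers F).
Local Open Scope ereal_scope.
Implicit Types (x y : nat -> R).

Lemma projn_le n x k : (`|projn n x k| <= `|x k|)%R.
Proof. by rewrite /projn /projA; case: ifP => _ //; rewrite normr0 normr_ge0. Qed.

Lemma projn_mono n m x k : (n <= m)%N -> (`|projn n x k| <= `|projn m x k|)%R.
Proof.
move=> nm; rewrite /projn /projA; case: asboolP => [kn|_]; last by rewrite normr0 normr_ge0.
by rewrite asboolT //= (leq_trans kn).
Qed.

Lemma Fnorm_lsc x :
  Fnorm F x <= ereal_sup (range (fun n => Fnorm F (projn n x))).
Proof.
set L := ereal_sup _.
have L0 : 0 <= L.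
  apply: le_trans (Fnorm_ge0 F (projn 0 x)) _; apply: ereal_sup_ubound; by exists 0%N.
case HL : L => [r| |]; [|by rewrite leey|by rewrite HL in L0].
apply/lee_addgt0Pr => e e0.
have HP : forall n, exists P, partitions_in F P /\ cost (projn n x) P <= r%:E + e%:E.
  move=> n; have : Fnorm F (projn n x) < r%:E + e%:E.
    apply: (@le_lt_trans _ _ r%:E).
      by rewrite -HL; apply: ereal_sup_ubound; exists n.
    by rewrite -EFinD lte_fin ltrDl.
  by move=> /ereal_inf_lt[_ [P HP <-] HPl]; exists P; split => //; exact: ltW.
have [Pn HPn] := choice HP.
have := @cluster_seq (nat * nat)%type setT (Erel Pn) (@PT_compact _) (fun _ => I).
case=> q _ Hq.
apply: le_trans (Fnorm_le _ (Pl_partF (fun n => (HPn n).1) Hq Fcomp Fher Fcov)) _.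
exact: (cost_Pl (fun n => (HPn n).1) Hq (fun n => (HPn n).2)).
Qed.

Lemma Fnorm_cvg x : (fun n => Fnorm F (projn n x)) @ \oo --> Fnorm F x.
Proof.
have mono : {homo (fun n => Fnorm F (projn n x)) : n m / (n <= m)%N >-> n <= m}.
  by move=> n m nm; apply: Fnorm_mono => k; exact: projn_mono.
have := ereal_nondecreasing_cvgn mono.
suff -> : ereal_sup (range (fun n => Fnorm F (projn n x))) = Fnorm F x by [].
apply/eqP; rewrite eq_le Fnorm_lsc andbT; apply: ge_ereal_sup => _ [n _ <-].
by apply: Fnorm_mono => k; exact: projn_le.
Qed.

End Final.

Theorem mainTheorem2 (R : realType) (F : set (set nat)) :
  fam_compact F -> fam_hereditary F -> fam_covers F ->
  quasi_norm (@Fnorm R F) /\ nice (@Fnorm R F) /\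
  (forall x : nat -> R, (fun n => Fnorm F (projn n x)) @ \oo --> Fnorm F x).
Proof.
move=> Fcomp Fher Fcov; split; [|split]; last first.
- by move=> x; apply: Fnorm_cvg.
- split.
  + move=> x fx; apply: le_lt_trans (Fnorm_le _ (Sg_part Fher Fcov)) _.
    exact: cost_Sg_fin.
  + by move=> x y; apply: Fnorm_mono.
  + by move=> x; apply: Fnorm_cvg.
split.
- exact: Fnorm_eq0.
- by move=> l x; apply: Fnorm_hom.
- exists 2%R; split; first by rewrite ler1n.
  by move=> x y; apply: Fnorm_tri.
Qed.
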